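(* Let $n,d$ be positive integers and let $M=M^i_{j,t}$ be an indecomposable non-projective $A_n^{dn}$-module. The following are equivalent: (1) $\underline{\mathrm{Hom}}(M,M)\cong k$, i.e. $M$ is a stable brick; (2) $\ell(M)\le n$ or $(d-1)n+1\le\ell(M)\le dn$; (3) $t=0$ or $t=d-1$.
   Context: $A_n^{dn}=kQ/I$ ($k$ algebraically closed), $Q$ the cyclic quiver with vertices $1,\dots,n$ and arrows $i\to i+1$, $n\to1$, $I$ generated by all paths of length $dn+1$ (a symmetric Nakayama algebra). $M^i_{j,t}$ denotes the indecomposable (uniserial) module with top $S_i$, socle $S_j$, in which $S_i$ occurs exactly $t+1$ times as a composition factor; $\ell(M)$ is its number of composition factors. $\underline{\mathrm{Hom}}$ is Hom modulo morphisms factoring through projectives. *)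

(* Defs.v *)
From HB Require Import structures.
From mathcomp Require Import all_boot all_order all_algebra.
Set Implicit Arguments. Unset Strict Implicit. Unset Printing Implicit Defensive.
Import GRing.Theory.
Local Open Scope ring_scope.

Section Reps.
Variable k : fieldType.
Variable n : nat.

(* A finite-dimensional representation of the cyclic quiver with vertices
   'I_n (vertex v has arrow v -> ordS v).  Row-vector convention:
   the arrow v -> v+1 acts by x |-> x *m rmap v. *)
Record rep := Rep {
  rdim : 'I_n -> nat;
  rmap : forall v : 'I_n, 'M[k]_(rdim v, rdim (ordS v)) }.

Fixpoint pathmx (V : rep) (v : 'I_n) (L : nat) :
    'M[k]_(rdim V v, rdim V (iter L (@ordS n) v)) :=
  match L with
  | 0 => 1%:M
  | L'.+1 => pathmx V v L' *m rmap V (iter L' (@ordS n) v)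
  end.

(* V is a module over A_n^{dn} = kQ/I, I generated by all paths of length dn+1 *)
Definition bound (d : nat) (V : rep) : Prop :=
  forall v : 'I_n, pathmx V v (d * n).+1 = 0.

Definition fam (V W : rep) := forall v : 'I_n, 'M[k]_(rdim V v, rdim W v).

Definition is_hom (V W : rep) (f : fam V W) : Prop :=
  forall v : 'I_n, rmap V v *m f (ordS v) = f v *m rmap W v.

(* composition: first f, then g *)
Definition comp (U V W : rep) (f : fam U V) (g : fam V W) : fam U W :=
  fun v => f v *m g v.

Definition idfam (V : rep) : fam V V := fun v => 1%:M.

Definition surj (V W : rep) (f : fam V W) : Prop :=
  forall v : 'I_n, row_full (f v).

Definition projective (d : nat) (P : rep) : Prop :=
  forall (X Y : rep), bound d X -> bound d Y ->
  forall (g : fam X Y) (f : fam P Y), is_hom g -> surj g -> is_hom f ->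
  exists h : fam P X, is_hom h /\ comp h g = f.

Definition factors_proj (d : nat) (V W : rep) (f : fam V W) : Prop :=
  exists (P : rep) (g : fam V P) (h : fam P W),
    [/\ bound d P, projective d P, is_hom g, is_hom h & f = comp g h].

(* Stable Hom(M,M) = End(M)/P(M,M) is isomorphic to k: the class of the
   identity is nonzero and spans the quotient. *)
Definition stable_brick (d : nat) (M : rep) : Prop :=
  ~ factors_proj d (idfam M) /\
  forall f : fam M M, is_hom f ->
    exists c : k, factors_proj d (fun v => f v - c *: idfam M v).

(* The uniserial module with top S_i and length l: basis positions
   p = 0..l-1, position p lying at vertex (i+p) mod n, and the arrows send
   position p to position p+1 (and position l-1 to 0). *)
Definition udim (i : 'I_n) (l : nat) (v : 'I_n) : nat :=
  count (fun p => (i + p) %% n == v)%N (iota 0 l).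

(* the r-th basis position lying at vertex v *)
Definition upos (i : 'I_n) (v : 'I_n) (r : nat) : nat :=
  ((v + n - i) %% n + r * n)%N.

Definition uniserial (i : 'I_n) (l : nat) : rep :=
  @Rep (udim i l) (fun v => \matrix_(r, r') ((upos i v r).+1 == upos i (ordS v) r')%:R).

(* number of composition factors of M^i_{j,t} *)
Definition Mlen (i j : 'I_n) (t : nat) : nat := ((j + n - i) %% n + 1 + t * n)%N.

(* M^i_{j,t}: top S_i, socle S_j, S_i occurring t+1 times *)
Definition Mijt (i j : 'I_n) (t : nat) : rep := uniserial i (Mlen i j t).

End Reps.

(* Main.v *)
Require Import Defs.
From mathcomp Require Import all_boot all_order all_algebra.
From mathcomp Require Import zify.
From Stdlib Require Import FunctionalExtensionality.
Set Implicit Arguments. Unset Strict Implicit. Unset Printing Implicit Defensive.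

Section Arith.
Variable n : nat.
Hypothesis n_gt0 : (0 < n)%N.
Variable i : 'I_n.

Definition apos (w : 'I_n) := ((w + n - i) %% n)%N.

Lemma apos_lt w : (apos w < n)%N.
Proof. by rewrite ltn_pmod. Qed.

Lemma apos_vert (w : 'I_n) : ((i + apos w) %% n)%N = w.
Proof.
rewrite /apos modnDmr.
have -> : (i + (w + n - i) = w + n)%N by have := ltn_ord i; lia.
by rewrite modnDr modn_small.
Qed.

Lemma vert_apos x (w : 'I_n) : ((i + x) %% n)%N = w -> (x %% n)%N = apos w.
Proof.
move=> h.
have : (i + x == i + apos w %[mod n])%N by rewrite apos_vert h.
by rewrite eqn_modDl => /eqP ->; rewrite modn_small // apos_lt.
Qed.

Lemma upos_vert (w : 'I_n) r : ((i + upos i w r) %% n)%N = w.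
Proof. by rewrite /upos addnA -modnDmr modnMl addn0 -/(apos w) apos_vert. Qed.

Lemma iterS_val m (v : 'I_n) : val (iter m (@ordS n) v) = ((v + m) %% n)%N.
Proof.
elim: m => [|m IH] /=; first by rewrite addn0 modn_small.
by rewrite IH /= -addn1 modnDml -addnA addn1.
Qed.

Lemma udimS L w : udim i L.+1 w = (udim i L w + ((i + L) %% n == w))%N.
Proof. by rewrite /udim -addn1 iotaD count_cat /= addn0 add0n. Qed.

Lemma udimP L (w : 'I_n) r : (r < udim i L w)%N = (upos i w r < L)%N.
Proof.
elim: L r => [|L IH] r; first by rewrite /udim /= ltn0.
rewrite udimS /upos -/(apos w).
case: eqP => [h|h].
- have hm := vert_apos h.
  have eL : L = (apos w + (L %/ n) * n)%N by rewrite -hm addnC -divn_eq.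
  set q := (L %/ n)%N in eL.
  have Hq : forall r, (r < udim i L w)%N = (r < q)%N.
    by move=> r'; rewrite IH /upos -/(apos w) {1}eL ltn_add2l ltn_pmul2r.
  have -> : udim i L w = q.
    have := Hq (udim i L w); have := Hq q.
    rewrite !ltnn. case: (ltngtP (udim i L w) q) => //=.
  by rewrite addn1 ltnS {1}eL ltnS leq_add2l leq_pmul2r.
- rewrite addn0 IH /upos -/(apos w) [in RHS]ltnS [in RHS]leq_eqVlt.
  case: eqP => //= e; exfalso; apply: h.
  by rewrite -e -/(upos i w r) upos_vert.
Qed.

End Arith.

Import GRing.Theory.
Local Open Scope ring_scope.

Section Sums.
Variable k : fieldType.

Lemma sum_sel1 N (f : 'I_N -> nat) (finj : injective f) (a : nat) (G : 'I_N -> k) r0 :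
  f r0 = a -> \sum_r (f r == a)%:R * G r = G r0.
Proof.
move=> h; rewrite (bigD1 r0) //= h eqxx mul1r big1 ?addr0 // => r /negbTE ne.
have : f r != a by apply/eqP => e; move: ne; rewrite -h in e; rewrite (finj _ _ e) eqxx.
by move/negbTE => ->; rewrite mul0r.
Qed.

Lemma sum_sel0 N (f : 'I_N -> nat) (a : nat) (G : 'I_N -> k) :
  (forall r, f r != a) -> \sum_r (f r == a)%:R * G r = 0.
Proof. by move=> h; rewrite big1 // => r _; rewrite (negbTE (h r)) mul0r. Qed.

End Sums.

Section Mat.
Variable k : fieldType.
Variable n : nat.
Hypothesis n_gt0 : (0 < n)%N.
Variable i : 'I_n.

Definition E (L : nat) (w : 'I_n) (q : nat) : 'rV[k]_(udim i L w) :=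
  \row_r ((upos i w r == q)%:R).

Lemma upos_inj (w : 'I_n) : injective (upos i w).
Proof. by move=> a b; rewrite /upos => /addnI /eqP; rewrite eqn_pmul2r // => /eqP. Qed.

Lemma upos_ord_inj L (w : 'I_n) : injective (fun r : 'I_(udim i L w) => upos i w r).
Proof. by move=> a b /upos_inj /val_inj. Qed.

Lemma upos_lt L (w : 'I_n) (r : 'I_(udim i L w)) : (upos i w r < L)%N.
Proof. by rewrite -udimP. Qed.

Lemma valid_ex L (w : 'I_n) q : (q < L)%N -> ((i + q) %% n)%N = w ->
  exists r : 'I_(udim i L w), upos i w r = q.
Proof.
move=> hq hv.
have eq : upos i w (q %/ n) = q.
  by rewrite /upos -/(apos i w) -(vert_apos n_gt0 hv) addnC -divn_eq.
have hr : (q %/ n < udim i L w)%N by rewrite udimP // eq.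
by exists (Ordinal hr).
Qed.

Lemma E_zero L w q : (L <= q)%N -> E L w q = 0.
Proof.
move=> h; apply/rowP => c; rewrite !mxE.
have := upos_lt c; case: eqP => // -> ; rewrite ltnNge h.
by [].
Qed.

Lemma E_delta L w (r : 'I_(udim i L w)) : delta_mx 0 r = E L w (upos i w r).
Proof.
apply/rowP => c; rewrite !mxE eqxx /=.
by rewrite (inj_eq (@upos_ord_inj L w)).
Qed.

Lemma E_rmap L (w : 'I_n) q : ((i + q) %% n)%N = w ->
  E L w q *m rmap (uniserial k i L) w = E L (ordS w) q.+1.
Proof.
move=> hv; apply/rowP => c; rewrite !mxE.
under eq_bigr do rewrite !mxE.
case: (ltnP q L) => hq.
- have [r0 e0] := valid_ex hq hv.
  rewrite (@sum_sel1 k _ (fun r : 'I_(udim i L w) => upos i w r) (@upos_ord_inj L w) q (fun r : 'I_(udim i L w) => ((upos i w r).+1 == upos i (ordS w) c)%:R) r0 e0).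
  by rewrite e0 eq_sym.
- rewrite sum_sel0; last first.
    by move=> r; apply/eqP => e; have := upos_lt r; rewrite e ltnNge hq.
  have := upos_lt c; case: eqP => // -> ; rewrite ltnNge (leq_trans hq) //.
Qed.

End Mat.

Section Gen.
Variable k : fieldType.
Variable n : nat.

Lemma hom_path (V W : rep k n) (f : fam V W) : is_hom f ->
  forall v m, pathmx V v m *m f (iter m (@ordS n) v) = f v *m pathmx W v m.
Proof.
move=> hf v; elim=> [|m IH] /=; first by rewrite mul1mx mulmx1.
by rewrite -mulmxA hf mulmxA IH mulmxA.
Qed.

Definition castrow (X : rep k n) (u w : 'I_n) (e : u = w) (x : 'rV[k]_(rdim X u)) :
  'rV[k]_(rdim X w) := match e in _ = w return 'rV[k]_(rdim X w) with erefl => x end.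

Lemma castrow_id X u (e : u = u) x : @castrow X u u e x = x.
Proof. by rewrite (eq_irrelevance e erefl). Qed.

Lemma castrow_irr X u w (e e' : u = w) x : @castrow X u w e x = castrow e' x.
Proof. by rewrite (eq_irrelevance e e'). Qed.

Lemma castrow0 X u w (e : u = w) : @castrow X u w e 0 = 0.
Proof. by subst w; rewrite castrow_id. Qed.

Lemma castrow_mul X u w (e : u = w) (e' : ordS u = ordS w) x :
  @castrow X u w e x *m rmap X w = castrow e' (x *m rmap X u).
Proof. subst w; rewrite castrow_id; by rewrite castrow_id. Qed.

Lemma castrow_fam X Y (f : fam X Y) u w (e : u = w) x :
  @castrow X u w e x *m f w = @castrow Y u w e (x *m f u).
Proof. by subst w; rewrite !castrow_id. Qed.

Lemma comp_hom (U V W : rep k n) (f : fam U V) (g : fam V W) :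
  is_hom f -> is_hom g -> is_hom (Defs.comp f g).
Proof. by move=> hf hg v; rewrite /Defs.comp mulmxA hf -mulmxA hg mulmxA. Qed.

Lemma sub_hom (V W : rep k n) (f g : fam V W) :
  is_hom f -> is_hom g -> is_hom (fun v => f v - g v).
Proof. by move=> hf hg v; rewrite mulmxBr mulmxBl hf hg. Qed.

Lemma scale_hom (V W : rep k n) (f : fam V W) c :
  is_hom f -> is_hom (fun v => c *: f v).
Proof. by move=> hf v; rewrite -scalemxAl -scalemxAr hf. Qed.

Lemma id_hom (V : rep k n) : is_hom (idfam V).
Proof. by move=> v; rewrite /idfam mulmx1 mul1mx. Qed.

Lemma fam_ext (V W : rep k n) (f g : fam V W) : (forall v, f v = g v) -> f = g.
Proof. exact: FunctionalExtensionality.functional_extensionality_dep. Qed.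

End Gen.

Section Uni.
Variable k : fieldType.
Variable n : nat.
Hypothesis n_gt0 : (0 < n)%N.
Variable i : 'I_n.

Lemma vert_iter (v : 'I_n) q m : ((i + q) %% n)%N = v ->
  ((i + (q + m)) %% n)%N = iter m (@ordS n) v.
Proof. by move=> h; rewrite iterS_val addnA -modnDml h. Qed.

Lemma E_path L m (v : 'I_n) q : ((i + q) %% n)%N = v ->
  E k i L v q *m pathmx (uniserial k i L) v m = E k i L (iter m (@ordS n) v) (q + m).
Proof.
move=> hv; elim: m => [|m IH] /=; first by rewrite mulmx1 addn0.
rewrite mulmxA IH E_rmap ?addnS //.
exact: vert_iter.
Qed.

Lemma iter_upos (w : 'I_n) r : iter (upos i w r) (@ordS n) i = w.
Proof. by apply: val_inj; rewrite iterS_val upos_vert. Qed.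

Lemma E_top_path L m : E k i L i 0 *m pathmx (uniserial k i L) i m = E k i L (iter m (@ordS n) i) m.
Proof. by rewrite E_path // addn0 modn_small. Qed.

Section Ext.
Variable L : nat.
Hypothesis L_gt0 : (0 < L)%N.
Variable X : rep k n.
Variable y : 'rV[k]_(rdim X i).
Hypothesis hy : y *m pathmx X i L = 0.

Definition ext : fam (uniserial k i L) X := fun w =>
  \matrix_(r < udim i L w) castrow (iter_upos w r) (y *m pathmx X i (upos i w r)).

Lemma cast_path_eq p p' (h : p = p') (w : 'I_n) (e : iter p (@ordS n) i = w) (e' : iter p' (@ordS n) i = w) :
  castrow e (y *m pathmx X i p) = castrow e' (y *m pathmx X i p').
Proof. by subst p'; rewrite (castrow_irr e e'). Qed.

Lemma ext_row (w : 'I_n) q (e : iter q (@ordS n) i = w) : (q < L)%N ->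
  E k i L w q *m ext w = castrow e (y *m pathmx X i q).
Proof.
move=> hq.
have hv : ((i + q) %% n)%N = w by rewrite -e iterS_val.
have [r0 e0] := valid_ex n_gt0 hq hv.
have -> : E k i L w q = delta_mx 0 r0 by rewrite E_delta // e0.
rewrite -rowE rowK.
exact: cast_path_eq.
Qed.

Lemma ext_hom : is_hom ext.
Proof.
move=> v; apply/row_matrixP => r.
rewrite !row_mul.
set p := upos i v r.
have hp : (p < L)%N by rewrite -udimP.
have -> : row r (rmap (uniserial k i L) v) = E k i L (ordS v) p.+1.
  by apply/rowP => c; rewrite !mxE eq_sym.
have e1 : iter p.+1 (@ordS n) i = ordS v by rewrite /= iter_upos.
rewrite rowK (castrow_mul _ e1) -mulmxA /=.
have -> : pathmx X i p *m rmap X (iter p (@ordS n) i) = pathmx X i p.+1 by [].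
case: (ltnP p.+1 L) => h.
- by rewrite (ext_row e1).
- have eL : p.+1 = L by apply/eqP; rewrite eqn_leq h hp.
  rewrite E_zero // mul0mx.
  have e2 : iter L (@ordS n) i = ordS v by rewrite -eL.
  by rewrite (cast_path_eq eL e1 e2) hy castrow0.
Qed.

Lemma ext_top : E k i L i 0 *m ext i = y.
Proof. by rewrite (@ext_row i 0 (erefl i) L_gt0) /= mulmx1. Qed.

End Ext.

Lemma hom_zero L (X : rep k n) (f : fam (uniserial k i L) X) : is_hom f ->
  E k i L i 0 *m f i = 0 -> forall v, f v = 0.
Proof.
move=> hf h0 v.
have key : forall p (w : 'I_n) (e : iter p (@ordS n) i = w), E k i L w p *m f w = 0.
  move=> p w e; subst w.
  by rewrite -E_top_path -mulmxA (hom_path hf) mulmxA h0 mul0mx.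
apply/row_matrixP => r; rewrite row0 rowE (E_delta k n_gt0).
exact: key (iter_upos v r).
Qed.

Lemma hom_eq L (X : rep k n) (f g : fam (uniserial k i L) X) : is_hom f -> is_hom g ->
  E k i L i 0 *m f i = E k i L i 0 *m g i -> f = g.
Proof.
move=> hf hg h; apply: fam_ext => v; apply/eqP; rewrite -subr_eq0; apply/eqP.
apply: (hom_zero (f := fun v => f v - g v)) => //; first exact: sub_hom.
by rewrite mulmxBr h subrr.
Qed.

End Uni.

Lemma id_factor_proj (k : fieldType) n d (V : rep k n) :
  factors_proj d (idfam V) -> projective d V.
Proof.
move=> [P [g [h [bP pP hg hh e]]]] X Y bX bY g' f hg' sg' hf.
have [k' [hk' ek']] := pP X Y bX bY g' (Defs.comp h f) hg' sg' (comp_hom hh hf).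
exists (Defs.comp g k'); split; first exact: comp_hom.
apply: fam_ext => v; rewrite /Defs.comp -mulmxA.
have -> : k' v *m g' v = h v *m f v by have := f_equal (fun F => F v) ek'.
by rewrite mulmxA -/(Defs.comp g h v) -e /idfam mul1mx.
Qed.

Section Main.
Variable k : fieldType.
Variable n : nat.
Hypothesis n_gt0 : (0 < n)%N.
Variable i : 'I_n.
Variable d : nat.

Notation Q := (uniserial k i (d * n).+1).

Lemma upos_ii r : upos i i r = (r * n)%N.
Proof. rewrite /upos. have -> : (i + n - i = n)%N by lia. by rewrite modnn. Qed.

Lemma vert0 : ((i + 0) %% n)%N = i.
Proof. by rewrite addn0 modn_small. Qed.

Lemma uni_bound L : (L <= (d * n).+1)%N -> bound d (uniserial k i L).
Proof.
move=> hL v; apply/row_matrixP => r.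
rewrite row0 rowE (E_delta k n_gt0) E_path //; last exact: upos_vert.
by rewrite E_zero // (leq_trans hL) // leq_addl.
Qed.

Lemma iter_vert q (w : 'I_n) : ((i + q) %% n)%N = w -> iter q (@ordS n) i = w.
Proof. by move=> h; apply: val_inj; rewrite iterS_val. Qed.

Lemma Q_proj : projective d Q.
Proof.
move=> X Y bX bY g f hg sg hf.
set y := E k i (d * n).+1 i 0 *m f i.
have /row_fullP [B hB] := sg i.
set x := y *m B.
have hx : x *m g i = y by rewrite /x -mulmxA hB mulmx1.
have hpx : x *m pathmx X i (d * n).+1 = 0 by rewrite bX mulmx0.
exists (ext n_gt0 (d * n).+1 x); split; first exact: (ext_hom n_gt0 hpx).
apply: (hom_eq n_gt0) => //; first by apply: comp_hom => //; exact: (ext_hom n_gt0 hpx).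
by rewrite /Defs.comp mulmxA (ext_top n_gt0 (ltn0Sn _)) hx.
Qed.


Lemma castrow_E L u w (e : u = w) q :
  @castrow k n (uniserial k i L) u w e (E k i L u q) = E k i L w q.
Proof. by subst w; rewrite castrow_id. Qed.

Lemma entry_delta N m (A : 'M[k]_(N, m)) r c : A r c = ((delta_mx 0 r : 'rV[k]_N) *m A) 0 c.
Proof. by rewrite -rowE mxE. Qed.

Lemma mul_entry N m (x : 'rV[k]_N) (A : 'M[k]_(N, m)) c (f : 'I_N -> nat) a r0 :
  injective f -> f r0 = a -> (forall r, A r c = (f r == a)%:R) -> (x *m A) 0 c = x 0 r0.
Proof.
move=> finj e hA; rewrite mxE.
under eq_bigr do rewrite hA mulrC.
exact: (@sum_sel1 k N f finj a (fun r => x 0 r) r0 e).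
Qed.

Section Len.
Variable l : nat.
Hypothesis l_gt0 : (0 < l)%N.
Hypothesis l_le : (l <= d * n)%N.

Notation M := (uniserial k i l).

Lemma hpi : E k i l i 0 *m pathmx M i (d * n).+1 = 0.
Proof. by rewrite E_top_path // E_zero // ltnW // ltnS. Qed.

Definition pi := ext n_gt0 (d * n).+1 (X := M) (E k i l i 0).

Lemma pi_hom : is_hom pi.
Proof. exact: (ext_hom n_gt0 hpi). Qed.

Lemma pi_E q (w : 'I_n) : (q < (d * n).+1)%N -> ((i + q) %% n)%N = w ->
  E k i (d * n).+1 w q *m pi w = E k i l w q.
Proof.
move=> hq hv.
by rewrite /pi (ext_row n_gt0 _ (iter_vert hv) hq) E_top_path // castrow_E.
Qed.

Lemma pi_surj : surj pi.
Proof.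
move=> v; apply/row_fullP.
exists (\matrix_(r < udim i l v) E k i (d * n).+1 v (upos i v r)).
apply/row_matrixP => r; rewrite row_mul rowK pi_E //; last exact: upos_vert.
  by rewrite -(E_delta k n_gt0) row1.
by rewrite ltnS (leq_trans _ l_le) // ltnW // upos_lt.
Qed.

Lemma no_brick : (n < l)%N -> (l <= (d - 1) * n)%N -> ~ stable_brick d M.
Proof.
move=> h1 h2 [_ Hb].
have vn : ((i + n) %% n)%N = i by rewrite modnDr modn_small.
have hys : E k i l i n *m pathmx M i l = 0.
  by rewrite E_path // E_zero // leq_addl.
set s := ext n_gt0 l (X := M) (E k i l i n).
have s_hom : is_hom s := ext_hom n_gt0 hys.
have s_top : E k i l i 0 *m s i = E k i l i n := ext_top n_gt0 l_gt0 _.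
have [c [P [g [h [bP pP hg hh e]]]]] := Hb s s_hom.
have [h' [hh' eh']] := pP Q M (uni_bound (leqnn _)) (uni_bound (leq_trans l_le (leqnSn _)))
   pi h pi_hom pi_surj hh.
have hgam : is_hom (Defs.comp g h') := comp_hom hg hh'.
set z := E k i l i 0 *m Defs.comp g h' i.
have hz : z *m pathmx Q i l = 0.
  rewrite /z -mulmxA -(hom_path hgam) mulmxA E_top_path // E_zero // mul0mx //.
have hzpi : z *m pi i = E k i l i n - c *: E k i l i 0.
  have e1 := f_equal (fun F => F i) e; have e2 := f_equal (fun F => F i) eh'.
  move: e1 e2; rewrite /Defs.comp /idfam /= => e1 e2.
  by rewrite /z /Defs.comp -!mulmxA e2 -e1 mulmxBr s_top -scalemxAr mulmx1.
have hnl : (n < l)%N := h1.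
have [r1 er1] := valid_ex n_gt0 hnl vn.
have hnQ : (n < (d * n).+1)%N by rewrite ltnS (leq_trans (ltnW h1)).
have [rq erq] := valid_ex n_gt0 hnQ vn.
have hlQ : (n + l < (d * n).+1)%N.
  rewrite ltnS; have : (l + n <= (d - 1) * n + n)%N by rewrite leq_add2r.
  by rewrite -mulSnr; case: (d) => [|d'] /=; rewrite ?subn1 /= ?mul0n; lia.
have [cq ecq] := valid_ex n_gt0 hlQ (vert_iter l vn).
have E1 : (z *m pi i) 0 r1 = z 0 rq.
  apply: (mul_entry _ (@upos_ord_inj _ n_gt0 i (d * n).+1 i) erq) => r.
  rewrite entry_delta (E_delta k n_gt0) pi_E ?upos_vert ?upos_lt //.
  by rewrite mxE er1 eq_sym.
have E2 : (z *m pathmx Q i l) 0 cq = z 0 rq.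
  apply: (mul_entry _ (@upos_ord_inj _ n_gt0 i (d * n).+1 i) erq) => r.
  rewrite entry_delta (E_delta k n_gt0) E_path ?upos_vert //.
  by rewrite mxE ecq eqn_add2r eq_sym.
move: E1 E2; rewrite hzpi hz !mxE er1 => <-.
rewrite eqxx (_ : (n == 0)%N = false) ?mulr0 ?subr0; last by case: (n) n_gt0.
by move/esym/eqP; rewrite oner_eq0.
Qed.


Lemma brick : ~ projective d M ->
  (forall r : 'I_(udim i l i), (0 < r)%N -> ((d * n).+1 <= upos i i r + l)%N) ->
  stable_brick d M.
Proof.
move=> nP H; split; first by move/id_factor_proj.
move=> f hf.
set x := E k i l i 0 *m f i.
have [r0 er0] := valid_ex n_gt0 l_gt0 vert0.
have r00 : val r0 = 0%N.
  by move: er0; rewrite upos_ii => /eqP; rewrite muln_eq0 (negbTE (lt0n_neq0 n_gt0)) orbF => /eqP.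
set c := x 0 r0.
exists c.
set coef := fun r : 'I_(udim i l i) => x 0 r - c * (r == r0)%:R.
set y := \sum_(r < udim i l i) coef r *: E k i (d * n).+1 i (upos i i r).
have hy : y *m pathmx Q i l = 0.
  rewrite /y mulmx_suml big1 // => r _.
  rewrite -scalemxAl E_path ?upos_vert //.
  case: (eqVneq r r0) => [->|ne].
    by rewrite /coef eqxx mulr1 subrr scale0r.
  rewrite E_zero ?scaler0 // H //.
  by rewrite lt0n; apply: contra ne => /eqP h0; apply/eqP; apply: val_inj; rewrite /= h0 r00.
set gam := ext n_gt0 l (X := Q) y.
have hgam : is_hom gam := ext_hom n_gt0 hy.
exists Q, gam, pi; split.
- exact: uni_bound.
- exact: Q_proj.
- exact: hgam.
- exact: pi_hom.
apply: (hom_eq n_gt0).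
- by apply: sub_hom => //; apply: scale_hom; apply: id_hom.
- exact: comp_hom hgam pi_hom.
rewrite /Defs.comp mulmxA (ext_top n_gt0 l_gt0) /y mulmx_suml.
rewrite mulmxBr -scalemxAr /idfam mulmx1 -/x.
rewrite [LHS]row_sum_delta; apply: eq_bigr => r _.
rewrite -scalemxAl pi_E ?upos_vert //; last first.
  by rewrite ltnS (leq_trans _ l_le) // ltnW // upos_lt.
rewrite -(E_delta k n_gt0) /coef !mxE.
have -> : (upos i i r == 0%N) = (r == r0).
  by rewrite -er0 (inj_eq (@upos_inj _ n_gt0 i i)).
by [].
Qed.

End Len.

Lemma bound_len L : bound d (uniserial k i L) -> (L <= (d * n).+1)%N.
Proof.
move=> hb; rewrite leqNgt; apply/negP => hL.
have hv : ((i + (d * n).+1) %% n)%N = iter (d * n).+1 (@ordS n) i by rewrite iterS_val.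
have [r er] := valid_ex n_gt0 hL hv.
have h0 : E k i L i 0 *m pathmx (uniserial k i L) i (d * n).+1 = 0 by rewrite hb mulmx0.
rewrite E_top_path // in h0.
move/rowP/(_ r): h0.
by rewrite !mxE er eqxx => /eqP; rewrite oner_eq0.
Qed.

End Main.

Theorem corollary2p11 (k : closedFieldType) (n d : nat) (i j : 'I_n) (t : nat) :
  (0 < n)%N -> (0 < d)%N ->
  bound d (Mijt k i j t) ->
  ~ projective d (Mijt k i j t) ->
  (stable_brick d (Mijt k i j t) <->
     ((Mlen i j t <= n)%N \/ ((d - 1) * n < Mlen i j t <= d * n)%N)) /\
  (((Mlen i j t <= n)%N \/ ((d - 1) * n < Mlen i j t <= d * n)%N) <->
     (t = 0%N \/ t = (d - 1)%N)).
Proof.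
move=> n_gt0 d_gt0 hb nP.
rewrite /Mijt in hb nP *.
have ha : ((j + n - i) %% n < n)%N by rewrite ltn_pmod.
have hl : Mlen i j t = ((j + n - i) %% n + 1 + t * n)%N by [].
set a0 := ((j + n - i) %% n)%N in ha hl.
set l := Mlen i j t in hb nP hl *.
have l1 := bound_len n_gt0 hb.
have l2 : (l <= d * n)%N.
  rewrite -ltnS ltn_neqAle l1 andbT; apply/negP => /eqP el.
  by apply: nP; rewrite el; apply: (Q_proj n_gt0).
have l_gt0 : (0 < l)%N by rewrite hl; lia.
have P2 : (l <= n)%N \/ ((d - 1) * n < l <= d * n)%N <-> t = 0%N \/ t = (d - 1)%N.
  rewrite hl; split.
  - case=> [h|/andP [h h']]; [left|right]; nia.
  - case=> ->; [left|right; apply/andP; split]; nia.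
split=> //.
split.
- move=> hbr.
  case: (leqP l n) => h1; first by left.
  right; apply/andP; split=> //.
  rewrite ltnNge; apply/negP => h2.
  exact: (no_brick n_gt0 l_gt0 l2 h1 h2 hbr).
- move=> hc; apply: (brick n_gt0 l_gt0 l2 nP) => r r_gt0.
  have := upos_lt n_gt0 r; rewrite upos_ii.
  case: hc => [h|/andP [h h']] hr; nia.
exact: n_gt0.
Qed.
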